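(* Let $\ell$ be a positive integer, let $A$ be the direct product of elementary abelian groups with $|A| = \ell$ (i.e. $A\cong \prod_{p\mid \ell} C_p^{d_p}$ where $p^{d_p}$ is the exact power of $p$ dividing $\ell$), and let $U \leq \mathrm{Aut}(A)$. Then the following are equivalent: (a) $U$ is $F$-relevant; (b) every extension $G$ of $A$ by $U$ satisfies $F(G) = A$; (c) there exists an extension $G$ of $A$ by $U$ with $F(G) = A$.
   Context: $F(G)$ denotes the Fitting subgroup of a finite group $G$. A subgroup $N \le \mathrm{Aut}(A)$ centralizes a series through $A$ if there is an $N$-invariant series of subgroups $A = A_1 > A_2 > \cdots > A_l > A_{l+1} = \{1\}$ such that $N$ induces the identity on every quotient $A_i/A_{i+1}$. A subgroup $U \le \mathrm{Aut}(A)$ is $F$-relevant if no non-trivial normal subgroup of $U$ centralizes a series through $A$. An extension of $A$ by $U$ is a group $G$ containing (a copy of) $A$ as a normal subgroup such that the conjugation action of $G$ on $A$ has kernel exactly $A$ and its image in $\mathrm{Aut}(A)$ is $U$ (so $G/A\cong U$ with the given action). *)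

(* Defs.v *)
From HB Require Import structures.
From mathcomp Require Import all_boot all_order all_fingroup all_solvable.
Set Implicit Arguments. Unset Strict Implicit. Unset Printing Implicit Defensive.
Import GroupScope.

(* A subgroup N of Aut(A) centralizes a series through A: there is a chain
   A = A_1 > A_2 > ... > A_{l+1} = 1 (written A :: s), each term N-invariant,
   each A_{i+1} normal in A_i, and N inducing the identity on A_i/A_{i+1},
   i.e. x^-1 * n x \in A_{i+1} for n in N, x in A_i. *)
Definition series_step (aT : finGroupType) (N : {set {perm aT}})
  (B C : {group aT}) : bool :=
  [&& C \proper B, C <| B,
      [forall n in N, [forall x in B, n x \in B]] &
      [forall n in N, [forall x in B, x^-1 * n x \in C]]].

Definition centralizes_series (aT : finGroupType) (N : {set {perm aT}})
  (A : {group aT}) : Prop :=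
  exists s : seq {group aT},
    path (series_step N) A s /\ last A s = 1%G.

Definition F_relevant (aT : finGroupType) (U : {group {perm aT}})
  (A : {group aT}) : Prop :=
  forall N : {group {perm aT}}, N <| U -> N != 1%G -> ~ centralizes_series N A.

(* G is an extension of A by U: K <| G is a copy of A (via the isomorphism f),
   the kernel of the conjugation action of G on K is exactly K, and the image
   of G in Aut(A) (transported along f) is exactly U. *)
Definition is_extension (aT gT : finGroupType) (A : {group aT})
  (U : {set {perm aT}}) (G K : {group gT}) (f : {morphism A >-> gT}) : Prop :=
  [/\ K <| G, isom A K f, 'C_G(K) = K,
      {in G, forall g, exists2 u, u \in U & {in A, forall x, f (u x) = f x ^ g}}
    & {in U, forall u : {perm aT}, exists2 g, g \in G & {in A, forall x, f (u x) = f x ^ g}}].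

(* Main.v *)
Require Import Defs.
From HB Require Import structures.
From mathcomp Require Import all_boot all_order all_fingroup all_solvable.
Set Implicit Arguments. Unset Strict Implicit. Unset Printing Implicit Defensive.
Import GroupScope.

Lemma stab_nil (gT : finGroupType) (M K : {group gT}) (c : nat -> {group gT}) (l : nat) :
  K \subset M -> 'C_M(K) \subset K -> c 0 = K ->
  (forall k, c k.+1 \subset c k) -> (forall k, M \subset 'N(c k)) ->
  (forall k, [~: c k, M] \subset c k.+1) -> c l = 1%G -> nilpotent M.
Proof.
move=> sKM cMK c0 cdec nMc cM cl.
have cK : forall k, c k \subset K.
  elim=> [|k IH]; first by rewrite c0.
  exact: subset_trans (cdec k) IH.
have cM' : forall k, c k \subset M by move=> k; exact: subset_trans (cK k) sKM.
have claim1 : forall j i, [~: c i, 'L_j.+1(M)] \subset c (i + j).+1.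
  elim=> [|j IH] i; first by rewrite addn0 lcn1.
  set X := c (i + j.+1).+1.
  have nXM := nMc (i + j.+1).+1; rewrite -/X in nXM.
  have sLM : 'L_j.+1(M) \subset M by apply: lcn_sub.
  have nXL := subset_trans sLM nXM.
  have nXc := subset_trans (cM' i) nXM.
  have nXMc : [~: M, c i] \subset 'N(X) by apply: subset_trans nXM; rewrite comm_subG.
  have nXcL : [~: c i, 'L_j.+1(M)] \subset 'N(X) by apply: subset_trans nXM; rewrite comm_subG.
  have nXLM : [~: 'L_j.+1(M), M] \subset 'N(X) by apply: subset_trans nXM; rewrite comm_subG.
  rewrite lcnSn commGC -(quotient_cents2 nXLM nXc).
  rewrite quotientR //; apply/commG1P.
  apply: (three_subgroup (G := (M / X)%G) (H := (c i / X)%G)).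
    apply/commG1P; rewrite -quotientR // (quotient_cents2 nXMc nXL).
    have h1 : [~: M, c i] \subset c i.+1 by rewrite commGC.
    apply: subset_trans (commgSS h1 (subxx _)) _.
    by rewrite /X -addSnnS; apply: IH.
  apply/commG1P; rewrite -quotientR // (quotient_cents2 nXcL nXM).
  apply: subset_trans (commgSS (IH i) (subxx M)) _.
  by rewrite /X addnS; apply: cM.
have claim2 : 'L_l.+1(M) \subset K.
  apply: subset_trans cMK; rewrite subsetI lcn_sub /=.
  apply/commG1P; apply/trivgP.
  suff: [~: K, 'L_l.+1(M)] \subset [1] by rewrite commGC.
  rewrite -c0; apply: subset_trans (claim1 l 0) _; rewrite add0n.
  by have := cdec l; rewrite cl.
have claim3 : forall j, 'L_(l.+1 + j)(M) \subset c j.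
  elim=> [|j IH]; first by rewrite addn0 c0.
  by rewrite addnS lcnSn; apply: subset_trans (cM j); apply: commgSS.
apply/lcnP; exists (l + l).
by apply/trivgP; rewrite -addSn; move: (claim3 l); rewrite cl.
Qed.
Lemma build_series (aT : finGroupType) (N : {set {perm aT}}) (n : nat) : forall (c : nat -> {group aT}),
  (forall k, c k.+1 \subset c k) -> (forall k, c k.+1 <| c k) ->
  (forall k, {in N, forall u : {perm aT}, {in c k, forall x, u x \in c k /\ x^-1 * u x \in c k.+1}}) ->
  c n = 1%G -> exists s, path (series_step N) (c 0) s /\ last (c 0) s = 1%G.
Proof.
elim: n => [|n IH] c cdec cnorm cact cn; first by exists [::].
have [s [ps ls]] := IH (fun k => c k.+1) (fun k => cdec k.+1) (fun k => cnorm k.+1)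
  (fun k => cact k.+1) cn.
case: (eqVneq (c 1%N) (c 0)) => e.
  by exists s; rewrite -e.
exists (c 1%N :: s); split => //=; rewrite ps andbT.
rewrite /series_step properEneq cdec cnorm andbT /=.
apply/andP; split; first by apply: contra_neq e => /val_inj.
apply/andP; split; apply/forall_inP => u Nu; apply/forall_inP => x Cx; by have [] := cact 0 u Nu x Cx.
Qed.
Section Ext.
Variables (aT gT : finGroupType) (A : {group aT}) (U : {group {perm aT}})
  (G K : {group gT}) (f : {morphism A >-> gT}).
Hypothesis sUAut : U \subset Aut A.
Hypothesis ext : is_extension U G K f.

Let nKG : K <| G. Proof. by case: ext. Qed.
Let injf : 'injm f. Proof. by case: ext => _ /isomP[]. Qed.
Let fA : f @* A = K. Proof. by case: ext => _ /isomP[]. Qed.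
Let cGK : 'C_G(K) = K. Proof. by case: ext. Qed.
Let actG : {in G, forall g, exists2 u, u \in U & {in A, forall x, f (u x) = f x ^ g}}.
Proof. by case: ext. Qed.
Let actU : {in U, forall u : {perm aT}, exists2 g, g \in G & {in A, forall x, f (u x) = f x ^ g}}.
Proof. by case: ext. Qed.

Definition phi (g : gT) : {perm aT} :=
  odflt 1 [pick u in U | [forall x in A, f (u x) == f x ^ g]].

Lemma phiP g : g \in G -> phi g \in U /\ {in A, forall x, f (phi g x) = f x ^ g}.
Proof.
move=> Gg; rewrite /phi; case: pickP => [v /andP[Uv /forall_inP H] | none] /=.
  by split=> // x Ax; apply/eqP/H.
have [u Uu Hu] := actG Gg.
have := none u; rewrite Uu /=; move/negbT/negP; case.
by apply/forall_inP => x Ax; rewrite Hu.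
Qed.

Lemma phi_uniq g u : g \in G -> u \in U -> {in A, forall x, f (u x) = f x ^ g} -> phi g = u.
Proof.
move=> Gg Uu Hu; have [Up Hp] := phiP Gg.
apply: (eq_Aut (subsetP sUAut _ Up) (subsetP sUAut _ Uu)) => x Ax.
apply: (injmP injf); rewrite ?Aut_closed ?(subsetP sUAut) //.
by rewrite Hp // Hu.
Qed.

Lemma phiM : {in G &, {morph phi : g h / g * h}}.
Proof.
move=> g h Gg Gh /=; have [Ug Hg] := phiP Gg; have [Uh Hh] := phiP Gh.
apply: phi_uniq; rewrite ?groupM // => x Ax.
rewrite permM Hh ?Aut_closed ?(subsetP sUAut) // Hg //.
by rewrite conjgM.
Qed.

Canonical phi_morphism := Morphism phiM.

Lemma im_phi : phi @* G = U.
Proof.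
apply/eqP; rewrite eqEsubset; apply/andP; split.
  by apply/subsetP => _ /morphimP[g Gg _ ->]; case: (phiP Gg).
apply/subsetP => u Uu; have [g Gg Hg] := actU Uu.
by rewrite -(phi_uniq Gg Uu Hg) mem_morphim.
Qed.

Lemma ker_phi : 'ker phi = K.
Proof.
rewrite -cGK; apply/setP => g; apply/idP/idP.
  move/morphpreP => [Gg /set1P p1]; rewrite inE Gg /= -fA.
  apply/centP => _ /morphimP[x Ax _ ->] /=.
  have [_ Hp] := phiP Gg; move: (Hp x Ax); rewrite p1 perm1 => e.
  by rewrite /commute [RHS]conjgC -e.
case/setIP => Gg cKg; apply/morphpreP; split => //; apply/set1P.
apply: phi_uniq => //.
move=> x Ax; rewrite perm1 /conjg; have: f x \in f @* A by rewrite mem_morphim.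
rewrite fA => Kx; by rewrite -(centP cKg _ Kx) mulKg.
Qed.


Lemma ext_ab (abA : abelian A) : F_relevant U A -> 'F(G) = K.
Proof.
move=> FR; set F := 'F(G).
have nFG : F <| G := Fitting_normal G.
have nilF : nilpotent F := Fitting_nil G.
have sFG := normal_sub nFG.
have sKF : K \subset F.
  apply: Fitting_max nKG _; apply: abelian_nil; rewrite -fA morphim_abelian //.
apply/eqP; rewrite eqEsubset sKF andbT.
have nNU : phi @* F <| U by rewrite -im_phi morphim_normal.
case: (eqVneq (phi @* F)%G 1%G) => [N1|Nn1].
  have N1' : phi @* F = 1 by move/(congr1 val): N1.
  rewrite -ker_phi -sub_morphim_pre // N1' //.
exfalso; apply: (FR _ nNU Nn1).
pose dch := fix dch k : {group gT} := if k is k'.+1 then [~: dch k', F]%G else K.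
have nFd : forall k, F \subset 'N(dch k).
  elim=> [|k IH]; first exact: subset_trans sFG (normal_norm nKG).
  exact: commg_normr.
have ddec : forall k, dch k.+1 \subset dch k by move=> k; rewrite /= commg_subl.
have dL : forall k, dch k \subset 'L_k.+1(F).
  elim=> [|k IH]; first by rewrite lcn1.
  by rewrite lcnSn /=; apply: commgSS.
have [n Ln] := lcnP _ nilF.
pose ca k := (f @*^-1 dch k)%G.
have ca0 : ca 0 = A by apply: val_inj; rewrite /= -fA injmK.
rewrite -ca0; apply: (build_series (n := n)).
- by move=> k; apply: morphpreS.
- move=> k; rewrite -sub_abelian_normal ?morphpreS //.
  exact: abelianS (morphpre_sub _ _) abA.
- move=> k u /morphimP[g Gg Fg ->] x /morphpreP[Ax fxd].
  have [Ug Hg] := phiP Gg.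
  have Agx : phi g x \in A by rewrite Aut_closed ?(subsetP sUAut).
  split; apply: mem_morphpre; rewrite ?groupM ?groupV //.
    by rewrite Hg // memJ_norm // (subsetP (nFd k)).
  rewrite morphM ?groupV // morphV // Hg //.
  by rewrite /= mem_commg.
- apply: val_inj; rewrite /=.
  have dn : dch n = 1 :> {set gT} by apply/trivgP; rewrite -Ln dL.
  by rewrite dn -/('ker f) ker_injm.
Qed.


Lemma ext_ca : 'F(G) = K -> F_relevant U A.
Proof.
move=> FGK N nNU Nn1 [s [ps ls]].
have sNU := normal_sub nNU.
have sKG := normal_sub nKG.
have preU : phi @*^-1 U = G by rewrite -im_phi morphimGK // ker_phi.
pose M := (phi @*^-1 N)%G.
have nMG : M <| G by rewrite /M -preU morphpre_normal // im_phi.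
pose ca k := nth 1%G (A :: s) k.
have ca_end : forall k, size s <= k -> ca k = 1%G.
  move=> k; rewrite leq_eqVlt => /orP[/eqP <-|lt].
    by rewrite /ca -last_nth.
  by rewrite /ca nth_default.
have u1 : forall u, u \in N -> u 1 = 1.
  move=> u Nu; have AU := subsetP sUAut u (subsetP sNU u Nu).
  by rewrite -(autmE AU) morph1.
have castep : forall k, [&& ca k.+1 \subset ca k,
   [forall u in N, [forall x in ca k, u x \in ca k]] &
   [forall u in N, [forall x in ca k, x^-1 * u x \in ca k.+1]]].
  move=> k; case: (ltnP k (size s)) => lt.
    move/pathP: ps => /(_ 1%G k lt) /and4P[/proper_sub -> _ -> ->] //.
  rewrite !ca_end ?(leq_trans lt) // subxx /=.
  apply/andP; split; apply/forall_inP => u Nu; apply/forall_inP => x /set1P ->;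
    by rewrite u1 // ?mulg1 ?invg1 group1.
have cadec : forall k, ca k.+1 \subset ca k by move=> k; case/and3P: (castep k).
have caA : forall k, ca k \subset A.
  elim=> [|k IH]; first by rewrite /ca /=.
  exact: subset_trans (cadec k) IH.
have cact : forall k, {in N, forall u : {perm aT}, {in ca k, forall x, u x \in ca k /\ x^-1 * u x \in ca k.+1}}.
  move=> k u Nu x cx; case/and3P: (castep k) => _ /forall_inP H1 /forall_inP H2.
  by split; [exact: (forall_inP (H1 u Nu)) | exact: (forall_inP (H2 u Nu))].
pose C k := (f @* ca k)%G.
have comm : forall k, [~: C k, M] \subset C k.+1.
  move=> k; rewrite gen_subG; apply/subsetP => _ /imset2P[y m Cy Mm ->].
  case/morphimP: Cy => x Ax cx ->; case/morphpreP: Mm => Gm phiN.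
  have [Um Hm] := phiP Gm.
  have [c1 c2] := cact k _ phiN x cx.
  have Agx : phi m x \in A by rewrite Aut_closed ?(subsetP sUAut).
  rewrite /commg -Hm // -morphV // -morphM ?groupV //.
  by rewrite mem_morphim // groupM ?groupV.
have nilM : nilpotent M.
  apply: (stab_nil (K := K) (c := C) (l := size s)).
  - by rewrite /M -ker_phi ker_sub_pre.
  - by rewrite -{2}cGK setSI // morphpre_sub.
  - by apply: group_inj; rewrite /= fA.
  - by move=> k; apply: morphimS.
  - by move=> k; rewrite -commg_subl; exact: subset_trans (comm k) (morphimS _ (cadec k)).
  - exact: comm.
  - by apply: group_inj; rewrite /= ca_end // morphim1.
have sMK : M \subset K by rewrite -FGK Fitting_max.
move/eqP: Nn1; apply; apply: group_inj; apply/trivgP => /=.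
rewrite -(morphpreK (f := phi_morphism) (R := N)) ?im_phi //.
rewrite -(morphim_ker phi_morphism) ker_phi morphimS //.
Qed.

End Ext.
Lemma exists_ext (aT : finGroupType) (A : {group aT}) (U : {group {perm aT}})
  (sUAut : U \subset Aut A) (abA : abelian A) :
  exists (gT : finGroupType) (G K : {group gT}) (f : {morphism A >-> gT}),
    is_extension U G K f.
Proof.
pose to := ract_groupAction (aut_groupAction A) sUAut.
have toE : forall x u, to x u = u x by [].
pose gT := sdprod_groupType to.
pose s1 := sdpair1_morphism to. pose s2 := sdpair2_morphism to.
pose K := (s1 @* A)%G.
have injs1 : 'injm s1 := injm_sdpair1 to.
have sdp := sdprod_sdpair to.
have [nKT _ _ _ _] := sdprod_context sdp.
have abK : abelian K by rewrite morphim_abelian.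
have cK1 : forall x, x \in A -> forall g, (s1 x) ^ g = s1 (g.1 x).
  move=> x Ax u; have := valP u; rewrite inE => /andP[Ua Ay].
  rewrite {1}[u]sdpairE conjgM -sdpair_act //.
  have Ax' : to x u.1 \in A by rewrite gact_stable.
  have Kz : s1 (to x u.1) \in K by rewrite mem_morphim.
  have Ky : s1 u.2 \in K by rewrite mem_morphim.
  by rewrite /conjg (centsP abK _ Kz _ Ky) mulKg toE.
exists gT, [set: gT]%G, K, s1; split.
- by [].
- by apply/isomP.
- apply/eqP; rewrite eqEsubset subsetI subsetT andbC /=; apply/andP; split; first exact: abK.
  apply/subsetP => u /setIP[_ cKu].
  have := valP u; rewrite inE => /andP[Ua Ay].
  have a1 : u.1 = 1.
    apply: (eq_Aut (subsetP sUAut _ Ua) (group1 _)) => x Ax.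
    have Kx : s1 x \in K by rewrite mem_morphim.
    apply: (injmP injs1); rewrite ?perm1 ?Aut_closed ?(subsetP sUAut) //.
    by rewrite -cK1 // /conjg -(centP cKu _ Kx) mulKg.
  by rewrite [u]sdpairE a1 morph1 mul1g mem_morphim.
- move=> g _; exists g.1; last by move=> x Ax; rewrite cK1.
  by have := valP g; rewrite inE => /andP[].
- move=> u Uu; exists (sdpair2 to u); first by rewrite inE.
  by move=> x Ax; rewrite -sdpair_act.
Qed.

Theorem lemma3p2 (l : nat) (aT : finGroupType) (A : {group aT})
  (U : {group {perm aT}}) :
  0 < l -> #|A| = l -> abelian A ->
  (forall p, prime p -> p.-abelem 'O_p(A)) ->
  U \subset Aut A ->
  [<-> F_relevant U A;
       forall (gT : finGroupType) (G K : {group gT}) (f : {morphism A >-> gT}),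
         is_extension U G K f -> 'F(G) = K;
       exists (gT : finGroupType) (G K : {group gT}) (f : {morphism A >-> gT}),
         is_extension U G K f /\ 'F(G) = K].
Proof.
move=> _ _ abA _ sUAut.
tfae.
- by move=> FR gT G K f ext; exact: ext_ab sUAut ext abA FR.
- move=> H; have [gT [G [K [f ext]]]] := exists_ext sUAut abA.
  by exists gT, G, K, f; split; last exact: H ext.
- by case=> gT [G [K [f [ext FGK]]]]; exact: ext_ca sUAut ext FGK.
Qed.
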